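(* Let $X$ be a metric space and $f : \mathbb{N} \to X$ a map. Then the following are equivalent: (i) $f$ can be extended to a continuous map $\widehat{f} : \widehat{\mathbb{N}} \to X$. (ii) For every $s \in \widehat{\mathbb{Z}}$ and every sequence of positive integers $(n_i)_{i \in \mathbb{N}}$ with $n_i \to +\infty$ in $\mathbb{R}$ and $\widehat{n_i} \to s$ in $\widehat{\mathbb{Z}}$ as $i \to \infty$, the limit $\lim_{i \to \infty} f(n_i)$ exists in $X$ and depends only on $s$ (not on the choice of the sequence $(n_i)$).
   Context: $\mathbb{N} = \{1,2,3,\dots\}$, $\widehat{\mathbb{Z}} = \varprojlim_n \mathbb{Z}/n\mathbb{Z}$ with its profinite topology, and $\widehat{\cdot} : \mathbb{N} \to \widehat{\mathbb{Z}}$ is the natural embedding. For positive integers $m,n$, $\mathbb{Z}_{m,n}$ is the finite semigroup with underlying set $\{1,\dots,m-1\} \sqcup \mathbb{Z}/n\mathbb{Z}$ (addition in $\{1,\dots,m-1\}$ when the sum is $< m$, otherwise addition modulo $n$ landing in $\mathbb{Z}/n\mathbb{Z}$), with quotient map $\pi_{m,n}: \mathbb{N} \to \mathbb{Z}_{m,n}$ sending $a$ to $a$ if $a<m$ and to $a \bmod n$ if $a \ge m$; for $m \le k$, $n \mid l$ there are natural compatible maps $\mathbb{Z}_{k,l} \to \mathbb{Z}_{m,n}$. $\widehat{\mathbb{N}}$ is the projective limit of the $\mathbb{Z}_{m,n}$ (each with the discrete topology), with the projective limit topology; it is a compact Hausdorff space, $\mathbb{N}$ embeds in it via $n \mapsto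 (\pi_{m,n}(n))_{m,n}$, and as a set $\widehat{\mathbb{N}} = \mathbb{N} \sqcup \widehat{\mathbb{Z}}$. A sequence of positive integers $(n_i)$ converges to $s \in \widehat{\mathbb{Z}} \subset \widehat{\mathbb{N}}$ if and only if $n_i \to \infty$ in $\mathbb{R}$ and $\widehat{n_i} \to s$ in $\widehat{\mathbb{Z}}$. *)

(* Defs.v *)
From HB Require Import structures.
From mathcomp Require Import all_boot all_order all_algebra.
From mathcomp Require Import all_classical all_reals all_analysis.
Set Implicit Arguments. Unset Strict Implicit. Unset Printing Implicit Defensive.
Import Order.TTheory GRing.Theory Num.Theory.
Local Open Scope classical_set_scope.

(** * The profinite integers  Zhat = lim_n Z/nZ.
    Indexing convention: the component of index [n : nat] lives in
    Z/(n+1)Z and is represented by its residue in {0,...,n}. *)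
Definition isZhat (s : nat -> nat) : Prop :=
  (forall n, s n <= n) /\
  (forall n l, n.+1 %| l.+1 -> s l %% n.+1 = s n).

Definition Zhat := {s : nat -> nat | isZhat s}.

Lemma embZ_proof (a : nat) : isZhat (fun n => a %% n.+1).
Proof.
split=> [n|n l hd]; first by rewrite -ltnS ltn_pmod.
by rewrite modn_dvdm.
Qed.

Definition embZ (a : nat) : Zhat := exist _ (fun n => a %% n.+1) (embZ_proof a).

HB.instance Definition _ := gen_eqMixin Zhat.
HB.instance Definition _ := gen_choiceMixin Zhat.
HB.instance Definition _ := isPointed.Build Zhat (embZ 0).
(** profinite topology = projective limit topology of the discrete Z/nZ:
    generated by the sets {s | s_n = k}. *)
HB.instance Definition _ := @isSubBaseTopological.Build Zhat
  (nat * nat)%type setT (fun i => [set s : Zhat | sval s i.1 = i.2]).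

(** Indexing convention: the component of index [(m, n) : nat * nat] lives in
    Z_{m+1,n+1} = {1,...,m} ⊔ Z/(n+1)Z, an element being represented as
    [inl a] with 1 <= a <= m, or [inr c] with c in {0,...,n} (a residue). *)
Definition Zmn_valid (m n : nat) (v : nat + nat) : bool :=
  match v with inl a => (0 < a <= m) | inr c => c <= n end.

Definition pimn (m n a : nat) : nat + nat :=
  if a <= m then inl a else inr (a %% n.+1).

Definition Zmn_trans (m n : nat) (v : nat + nat) : nat + nat :=
  match v with inl a => pimn m n a | inr c => inr (c %% n.+1) end.

Definition isNhat (x : nat -> nat -> nat + nat) : Prop :=
  (forall m n, Zmn_valid m n (x m n)) /\
  (forall m n k l, m <= k -> n.+1 %| l.+1 -> Zmn_trans m n (x k l) = x m n).

Definition Nhat := {x : nat -> nat -> nat + nat | isNhat x}.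

Lemma embN_proof (a : nat) : 0 < a -> isNhat (fun m n => pimn m n a).
Proof.
move=> ha; split=> [m n|m n k l hmk hd]; rewrite /pimn.
  by case: ifP => h /=; [rewrite ha h | rewrite -ltnS ltn_pmod].
case: ifP => hak /=; first by [].
rewrite modn_dvdm //; case: ifP => // ham.
by move: hak; rewrite (leq_trans ham hmk).
Qed.

Definition embN (a : nat) (ha : 0 < a) : Nhat :=
  exist _ (fun m n => pimn m n a) (embN_proof ha).

HB.instance Definition _ := gen_eqMixin Nhat.
HB.instance Definition _ := gen_choiceMixin Nhat.
HB.instance Definition _ := isPointed.Build Nhat (@embN 1 isT).
(** projective limit topology of the discrete Z_{m,n}: generated by the sets
    {x | x_{(m,n)} = v}; indices with [None] give the (irrelevant) empty set. *)
HB.instance Definition _ := @isSubBaseTopological.Build Nhat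
  (nat * nat * option (nat + nat))%type setT
  (fun i => [set x : Nhat | Some (sval x i.1.1 i.1.2) = i.2]).

(* Main.v *)
Require Import Defs.
From HB Require Import structures.
From mathcomp Require Import all_boot all_order all_algebra.
From mathcomp Require Import all_classical all_reals all_analysis.
From mathcomp Require Import finmap lra.
Import Order.TTheory GRing.Theory Num.Theory.
Local Open Scope classical_set_scope.

Definition bN (i : nat * nat * option (nat + nat)) : set Nhat :=
  [set x : Nhat | Some (sval x i.1.1 i.1.2) = i.2].
Definition bZ (i : nat * nat) : set Zhat := [set s : Zhat | sval s i.1 = i.2].

Lemma Nhat_sub_open i : open (bN i).
Proof.
exists [set bN i].
  by move=> A /= ->; apply: (@finI_from1 _ _ setT bN).
by rewrite bigcup_set1.
Qed.

Lemma Zhat_sub_open i : open (bZ i).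
Proof.
exists [set bZ i].
  by move=> A /= ->; apply: (@finI_from1 _ _ setT bZ).
by rewrite bigcup_set1.
Qed.

Lemma Nhat_nbhs (x : Nhat) A : nbhs x A ->
  exists E : {fset (nat * nat * option (nat + nat))},
    (forall i, i \in E -> bN i x) /\ \bigcap_(i in [set` E]) bN i `<=` A.
Proof.
case=> B [[D' sD' <-] xB sBA].
case: xB => C DC xC.
have [E _ eC] := sD' _ DC.
exists E; split.
  by move=> i iE; move: xC; rewrite -eC; apply.
by move=> y yE; apply: sBA; exists C => //; rewrite -eC.
Qed.

Lemma Zhat_nbhs (x : Zhat) A : nbhs x A ->
  exists E : {fset (nat * nat)},
    (forall i, i \in E -> bZ i x) /\ \bigcap_(i in [set` E]) bZ i `<=` A.
Proof.
case=> B [[D' sD' <-] xB sBA].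
case: xB => C DC xC.
have [E _ eC] := sD' _ DC.
exists E; split.
  by move=> i iE; move: xC; rewrite -eC; apply.
by move=> y yE; apply: sBA; exists C => //; rewrite -eC.
Qed.

Lemma Nhat_cvg (F : set_system Nhat) {FF : Filter F} (x : Nhat) :
  (forall i, bN i x -> F (bN i)) -> F --> x.
Proof.
move=> H A /Nhat_nbhs [E [Ex sA]].
change (F A); apply: (@filterS _ F FF _ _ sA); apply: filter_bigI => i /Ex; exact: H.
Qed.

Lemma Zhat_cvg (F : set_system Zhat) {FF : Filter F} (x : Zhat) :
  (forall i, bZ i x -> F (bZ i)) -> F --> x.
Proof.
move=> H A /Zhat_nbhs [E [Ex sA]].
change (F A); apply: (@filterS _ F FF _ _ sA); apply: filter_bigI => i /Ex; exact: H.
Qed.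

Lemma Zhat_near {F : set_system Zhat} {FF : Filter F} {x : Zhat} i :
  F --> x -> bZ i x -> F (bZ i).
Proof.
move=> Fx bi; apply: Fx; apply: open_nbhs_nbhs; split => //.
exact: Zhat_sub_open.
Qed.

Lemma Nhat_near {F : set_system Nhat} {FF : Filter F} {x : Nhat} i :
  F --> x -> bN i x -> F (bN i).
Proof.
move=> Fx bi; apply: Fx; apply: open_nbhs_nbhs; split => //.
exact: Nhat_sub_open.
Qed.

Lemma zle (s : Zhat) n : sval s n <= n.
Proof. by have [h _] := svalP s; apply: h. Qed.

Lemma zcompat (s : Zhat) n l : n.+1 %| l.+1 -> sval s l %% n.+1 = sval s n.
Proof. by have [_ h] := svalP s; apply: h. Qed.

Definition PK K := (K.+1)`!.-1.

Lemma PKS K : (PK K).+1 = (K.+1)`!.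
Proof. by rewrite /PK prednK // fact_gt0. Qed.

Lemma dvdPK n K : n <= K -> n.+1 %| (PK K).+1.
Proof. by move=> h; rewrite PKS dvdn_fact. Qed.
Arguments dvdPK {n K}.

Lemma modPK (s : Zhat) n K : n <= K -> sval s (PK K) %% n.+1 = sval s n.
Proof. by move=> h; apply: zcompat; apply: dvdPK. Qed.

Lemma nvalid (x : Nhat) m n : Zmn_valid m n (sval x m n).
Proof. by have [h _] := svalP x; apply: h. Qed.

Lemma ncompat (x : Nhat) m n k l : m <= k -> n.+1 %| l.+1 ->
  Zmn_trans m n (sval x k l) = sval x m n.
Proof. by have [_ h] := svalP x; apply: h. Qed.

Lemma iota_proof (s : Zhat) : isNhat (fun m n => inr (sval s n)).
Proof.
split=> [m n|m n k l hmk hd] /=; first exact: zle.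
by rewrite zcompat.
Qed.

Definition iotaZ (s : Zhat) : Nhat := exist _ _ (iota_proof s).

Definition toZf (x : Nhat) (n : nat) : nat :=
  match sval x 0 n with inr c => c | inl _ => 0 end.

Lemma toZ_proof x : isZhat (toZf x).
Proof.
rewrite /toZf; split=> [n|n l hd].
  by have := nvalid x 0 n; case: (sval x 0 n).
have := @ncompat x 0 n 0 l (leqnn 0) hd.
have := nvalid x 0 l; have := nvalid x 0 n.
case: (sval x 0 l) => [a|c] /=; first by case: a.
by case: (sval x 0 n) => [b|d] //= _ _ [].
Qed.

Definition toZ (x : Nhat) : Zhat := exist _ _ (toZ_proof x).

Lemma int_pt (x : Nhat) a : sval x a 0 = inl a ->
  0 < a /\ forall m n, sval x m n = pimn m n a.
Proof.
move=> ha; split.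
  by have := nvalid x a 0; rewrite ha /= => /andP [].
move=> m n.
have hk : a <= maxn m a by rewrite leq_maxr.
have := @ncompat x a 0 (maxn m a) n hk (dvd1n n.+1).
rewrite ha.
case E: (sval x (maxn m a) n) => [c|c] //=.
rewrite /pimn; case: ifP => // hca [] ec; subst c.
have := @ncompat x m n (maxn m a) n (leq_maxl m a) (dvdnn n.+1).
by rewrite E.
Qed.
Arguments int_pt {x a}.

Lemma nonint_pt (x : Nhat) : (forall a, sval x a 0 <> inl a) ->
  forall m n, sval x m n = inr (sval (toZ x) n).
Proof.
move=> hx m n.
case E: (sval x m n) => [c|c].
  have := nvalid x m n; rewrite E /= => /andP [c0 cm].
  have := @ncompat x c 0 m n cm (dvd1n n.+1); rewrite E /= /pimn leqnn => h.
  by case: (hx c); rewrite h.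
rewrite /toZ /= /toZf.
have := @ncompat x 0 n m n (leq0n m) (dvdnn n.+1); rewrite E /= => <-.
have := nvalid x m n; rewrite E /= => hc.
by rewrite modn_small.
Qed.
Arguments nonint_pt {x}.

Lemma dir1 (R : realType) (X : metricType R) (f : nat -> X) (F : Nhat -> X) :
  continuous F -> (forall n (hn : (0 < n)%N), F (embN hn) = f n) ->
  forall (s : Zhat) (u : nat -> nat), (forall i, (0 < u i)%N) ->
  (forall M : nat, \forall i \near \oo, (M <= u i)%N) ->
  ((embZ \o u) @ \oo --> s) -> (f \o u) @ \oo --> F (iotaZ s).
Proof.
move=> cF hF s u u0 uinf us.
have -> : f \o u = F \o (fun i => embN (u0 i)).
  by apply: funext => i /=; rewrite hF.
suff hc : (fun i => embN (u0 i)) @ \oo --> iotaZ s.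
  by move=> A /(cF (iotaZ s)) /hc.
apply: Nhat_cvg => -[[m n] o]; rewrite /bN /= => <-.
have h1 : \forall i \near \oo, (u i %% n.+1 = sval s n)%N.
  by have := Zhat_near (n, sval s n) us erefl; apply; exact: _.
have h2 := uinf m.+1.
have FF : Filter (nbhs (\oo : set_system nat)) by exact: _.
apply: (filterS2 FF _ h1 h2) => i /= e1 e2.
rewrite /bN /= /pimn leqNgt e2 /=.
by rewrite -e1.
Qed.

Definition Hg (R : realType) (X : metricType R) (f : nat -> X) (g : Zhat -> X) :=
  forall (s : Zhat) (u : nat -> nat),
        (forall i, (0 < u i)%N) ->
        (forall M : nat, \forall i \near \oo, (M <= u i)%N) ->
        ((embZ \o u) @ \oo --> s) ->
        ((f \o u) @ \oo --> g s).
Arguments Hg {R X}.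

Lemma cvgZ_of (t : Zhat) (u : nat -> nat) :
  (forall n, \forall i \near \oo, (u i %% n.+1 = sval t n)%N) ->
  (embZ \o u) @ \oo --> t.
Proof.
move=> h; apply: Zhat_cvg => -[n k]; rewrite /bZ /= => <-; exact: h n.
Qed.

Lemma claimB (R : realType) (X : metricType R) (f : nat -> X) (g : Zhat -> X) :
  Hg f g -> forall (t : Zhat) (e : R) K, (0 < e)%R ->
  exists n, (K < n)%N /\ (n %% (PK K).+1 = sval t (PK K))%N /\ ball (g t) e (f n).
Proof.
move=> hg t e K e0.
pose u i := (i.+1 * (PK i).+1 + sval t (PK i))%N.
have umod n i : (n <= i)%N -> (u i %% n.+1 = sval t n)%N.
  move=> ni; rewrite /u; have /dvdnP [q ->] := dvdPK ni.
  by rewrite mulnA modnMDl modPK.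
have uge i : (i < u i)%N.
  rewrite /u; apply: (@leq_trans (i.+1 * (PK i).+1)); last exact: leq_addr.
  by apply: leq_pmulr.
have u0 i : (0 < u i)%N by apply: leq_ltn_trans (uge i).
have uinf M : \forall i \near \oo, (M <= u i)%N.
  by apply: filterS (nbhs_infty_ge M) => i hi; apply: (leq_trans hi); apply: ltnW.
have cu : (embZ \o u) @ \oo --> t.
  apply: cvgZ_of => n; apply: filterS (nbhs_infty_ge n) => i hi; exact: umod.
have FF : Filter (nbhs (\oo : set_system nat)) by exact: _.
have hb : \forall i \near \oo, ball (g t) e (f (u i)).
  by have := cvg_ball (hg t u u0 uinf cu) e0; apply; exact: _.
have := filterS2 FF _ hb (nbhs_infty_ge (maxn K (PK K))).
move=> /(_ (fun i => ball (g t) e (f (u i)) /\ (maxn K (PK K) <= i)%N)).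
move=> /(_ (fun i a b => conj a b)) /filter_ex [i [bi ki]].
exists (u i); split; last split => //.
- apply: (leq_ltn_trans _ (uge i)); apply: leq_trans ki; exact: leq_maxl.
- apply: umod; apply: leq_trans ki; exact: leq_maxr.
Qed.
Arguments claimB {R X f g}.

Lemma claimA (R : realType) (X : metricType R) (f : nat -> X) (g : Zhat -> X) :
  Hg f g -> forall (s : Zhat) (e : R), (0 < e)%R ->
  exists K, forall n, (K < n)%N -> (n %% (PK K).+1 = sval s (PK K))%N ->
    ball (g s) e (f n).
Proof.
move=> hg s e e0.
case: (pselect (exists K, forall n, (K < n)%N -> (n %% (PK K).+1 = sval s (PK K))%N ->
    ball (g s) e (f n))) => // hn.
have H : forall K, exists n, (K < n)%N /\ (n %% (PK K).+1 = sval s (PK K))%N /\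
    ~ ball (g s) e (f n).
  move=> K; apply: contrapT => hK; apply: hn; exists K => n h1 h2.
  by apply: contrapT => hb; apply: hK; exists n.
have [u hu] := choice H.
have uge K : (K < u K)%N by have [] := hu K.
have u0 i : (0 < u i)%N by apply: leq_ltn_trans (uge i).
have uinf M : \forall i \near \oo, (M <= u i)%N.
  by apply: filterS (nbhs_infty_ge M) => i hi; apply: (leq_trans hi); apply: ltnW.
have umod n K : (n <= K)%N -> (u K %% n.+1 = sval s n)%N.
  move=> nK; have [_ [hm _]] := hu K.
  by rewrite -(modn_dvdm _ (@dvdPK n K nK)) hm modPK.
have cu : (embZ \o u) @ \oo --> s.
  apply: cvgZ_of => n; apply: filterS (nbhs_infty_ge n) => i hi; exact: umod.
have FF : Filter (nbhs (\oo : set_system nat)) by exact: _.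
have hb : \forall i \near \oo, ball (g s) e (f (u i)).
  by have := cvg_ball (hg s u u0 uinf cu) e0; apply; exact: _.
have [i bi] := filter_ex hb.
by have [_ [_]] := hu i.
Qed.
Arguments claimA {R X f g}.

Definition Fd (X : Type) (f : nat -> X) (g : Zhat -> X) (x : Nhat) : X :=
  if pselect (exists a, sval x a 0 = inl a) is left _
  then f (xget 0%N [set a | sval x a 0 = inl a]) else g (toZ x).
Arguments Fd {X}.

Lemma Fd_int (X : Type) (f : nat -> X) (g : Zhat -> X) (x : Nhat) (a : nat) :
  sval x a 0 = inl a -> Fd f g x = f a.
Proof.
move=> ha; rewrite /Fd; case: pselect => [hex|hn]; last by case: hn; exists a.
have hb := xgetPex 0%N hex.
move: (xget _ _) hb => b /= hb.
have [_ hp] := int_pt ha.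
move: hb; rewrite hp /pimn; case: ifP => // hab [] ->.
by [].
Qed.
Arguments Fd_int {X f g x a}.

Lemma Fd_nonint (X : Type) (f : nat -> X) (g : Zhat -> X) (x : Nhat) :
  (forall a, sval x a 0 <> inl a) -> Fd f g x = g (toZ x).
Proof.
move=> hx; rewrite /Fd; case: pselect => // -[a ha].
by case: (hx a).
Qed.
Arguments Fd_nonint {X f g x}.

Lemma Fd_cont (R : realType) (X : metricType R) (f : nat -> X) (g : Zhat -> X) :
  Hg f g -> continuous (Fd f g).
Proof.
move=> hg x.
have FN : Filter (nbhs x) by exact: _.
apply/(cvg_ballP (FF := FN)) => e e0.
case: (pselect (exists a, sval x a 0 = inl a)) => [[a ha]|hx].
  have nb : nbhs x (bN (a, 0%N, Some (inl a))).
    apply: open_nbhs_nbhs; split; first exact: Nhat_sub_open.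
    by rewrite /bN /= ha.
  apply: (@filterS _ _ FN _ _ _ nb) => y; rewrite /bN /= => -[hy].
  by rewrite (Fd_int ha) (Fd_int hy); apply: ballxx.
have hx' : forall a, sval x a 0 <> inl a by move=> a ha; apply: hx; exists a.
set s := toZ x.
have e20 : (0 < e / 2)%R by rewrite divr_gt0.
have [K hK] := claimA hg s _ e20.
have nb : nbhs x (bN (K, PK K, Some (inr (sval s (PK K))))).
  apply: open_nbhs_nbhs; split; first exact: Nhat_sub_open.
  by rewrite /bN /= (nonint_pt hx').
apply: (@filterS _ _ FN _ _ _ nb) => y; rewrite /bN /= => -[hy].
rewrite (Fd_nonint hx') -/s.
case: (pselect (exists a, sval y a 0 = inl a)) => [[a ha]|hyn].
  rewrite (Fd_int ha).
  have [_ hp] := int_pt ha.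
  move: hy; rewrite hp /pimn; case: ifP => // haK [] hm.
  apply: (le_ball (e1 := e / 2)); first lra.
  by apply: hK => //; rewrite ltnNge haK.
have hy' : forall a, sval y a 0 <> inl a by move=> a ha; apply: hyn; exists a.
rewrite (Fd_nonint hy').
set t := toZ y.
have ht : sval t (PK K) = sval s (PK K).
  by move: hy; rewrite (nonint_pt hy') => -[].
have [n [Kn [hn bn]]] := claimB hg t _ K e20.
have bs := hK n Kn (etrans hn ht).
rewrite [e]splitr.
exact: ball_triangle bs (ball_sym bn).
Qed.

Theorem proposition2p2 (R : realType) (X : metricType R) (f : nat -> X) :
  (exists F : Nhat -> X,
      continuous F /\ forall (n : nat) (hn : (0 < n)%N), F (embN hn) = f n)
  <->
  (exists g : Zhat -> X,
      forall (s : Zhat) (u : nat -> nat),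
        (forall i, (0 < u i)%N) ->
        (forall M : nat, \forall i \near \oo, (M <= u i)%N) ->
        ((embZ \o u) @ \oo --> s) ->
        ((f \o u) @ \oo --> g s)).
Proof.
split.
  move=> [F [cF hF]]; exists (fun s => F (iotaZ s)) => s u u0 uinf us.
  exact: dir1.
move=> [g hg]; exists (Fd f g); split; first exact: Fd_cont.
move=> n hn; apply: Fd_int => /=.
by rewrite /pimn leqnn.
Qed.
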